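(* Let $H\in\mathbb{R}^{n_z\times n_z}$ be symmetric positive definite, $F\in\mathbb{R}^{n_x\times n_z}$, $G\in\mathbb{R}^{n_c\times n_z}$, $S\in\mathbb{R}^{n_c\times n_x}$, $w\in\mathbb{R}^{n_c}$, and assume $\{z: Gz\le Sx+w\}\neq\emptyset$ for every $x\in\mathbb{R}^{n_x}$. Assume LICQ: for every $x\in\mathbb{R}^{n_x}$, the rows $\{G_j: j\in\mathbb{A}(x)\}$ are linearly independent. Let $\kappa$ be a global Lipschitz constant, let $\hat{x}^1,\dots,\hat{x}^q\in\mathbb{R}^{n_x}$ and $x\in\mathbb{R}^{n_x}$. Define index sets recursively by $\mathbb{I}_0=\{1,\dots,n_c\}$ and, for $k=1,\dots,q$, $$\mathbb{T}_k=\big\{j\in\mathbb{A}^c(\hat{x}^k)\cap\mathbb{I}_{k-1} : \mathcal{B}(z^*(\hat{x}^k),\kappa\|x-\hat{x}^k\|)\not\subseteq\mathcal{Z}_j(x)\big\},\qquad \mathbb{I}_k=\big(\mathbb{A}(\hat{x}^k)\cap\mathbb{I}_{k-1}\big)\cup\mathbb{T}_k,$$ and set $\mathbb{I}(x)=\mathbb{I}_q$. Then $z^*(x,\mathbb{I}(x))=z^*(x)$.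
   Context: For a parameter $x$, mp-QP$(x)$ is: minimize $V(z)=\frac12 z^THz+x^TFz$ over $z\in\mathcal{Z}(x)=\{z\in\mathbb{R}^{n_z}: Gz\le Sx+w\}$. $G_j,S_j$ are the $j$-th rows of $G,S$, $w_j$ the $j$-th entry of $w$, $\mathcal{Z}_j(x)=\{z: G_jz\le S_jx+w_j\}$. For $\mathbb{I}\subseteq\{1,\dots,n_c\}$, $\mathcal{Z}(x,\mathbb{I})=\bigcap_{j\in\mathbb{I}}\mathcal{Z}_j(x)$ ($=\mathbb{R}^{n_z}$ if $\mathbb{I}=\emptyset$) and $z^*(x,\mathbb{I})$ is the unique minimizer of $V$ over $\mathcal{Z}(x,\mathbb{I})$; $z^*(x)=z^*(x,\{1,\dots,n_c\})$. Active set $\mathbb{A}(x)=\{j: G_jz^*(x)=S_jx+w_j\}$, inactive set $\mathbb{A}^c(x)=\{j: G_jz^*(x)<S_jx+w_j\}$. A global Lipschitz constant is $\kappa\in\mathbb{R}$ with $\|z^*(x_1,\mathbb{I})-z^*(x_2,\mathbb{I})\|\le\kappa\|x_1-x_2\|$ for all $x_1,x_2$ and all $\mathbb{I}\subseteq\{1,\dots,n_c\}$. $\mathcal{B}(q,r)$ is the closed Euclidean ball. For $G_j\ne0$, the condition $\mathcal{B}(z^*(\hat x^k),\kappa\|x-\hat x^k\|)\not\subseteq\mathcal{Z}_j(x)$ is equivalent to $\kappa\|x-\hat{x}^k\|>\frac{w_j+S_jx-G_jz^*(\hat{x}^k)}{\|G_j\|}$, which is how the paper's Algorithm 2 writes it.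 *)

(* Defs.v *)
From HB Require Import structures.
From mathcomp Require Import all_boot all_order all_algebra.
From mathcomp Require Import reals.
From Stdlib Require Import ClassicalEpsilon.
Set Implicit Arguments. Unset Strict Implicit. Unset Printing Implicit Defensive.
Import Order.TTheory GRing.Theory Num.Theory.
Local Open Scope ring_scope.

Section MPQP.
Variables (R : realType) (nz nx nc : nat).
Variables (H : 'M[R]_nz) (F : 'M[R]_(nx, nz)) (G : 'M[R]_(nc, nz))
          (S : 'M[R]_(nc, nx)) (w : 'cV[R]_nc).

Definition vnorm (m : nat) (v : 'cV[R]_m) : R := Num.sqrt (\sum_i (v i 0) ^+ 2).

Definition Vobj (x : 'cV[R]_nx) (z : 'cV[R]_nz) : R :=
  2^-1 * (z^T *m H *m z) 0 0 + (x^T *m F *m z) 0 0.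

Definition inZj (x : 'cV[R]_nx) (j : 'I_nc) (z : 'cV[R]_nz) : Prop :=
  (G *m z) j 0 <= (S *m x + w) j 0.

Definition inZI (x : 'cV[R]_nx) (I : {set 'I_nc}) (z : 'cV[R]_nz) : Prop :=
  forall j, j \in I -> inZj x j z.

Definition is_minimizer (x : 'cV[R]_nx) (I : {set 'I_nc}) (z : 'cV[R]_nz) : Prop :=
  inZI x I z /\ forall z', inZI x I z' -> Vobj x z <= Vobj x z'.

Definition zstarI (x : 'cV[R]_nx) (I : {set 'I_nc}) : 'cV[R]_nz :=
  epsilon (inhabits 0) (is_minimizer x I).

Definition zstar (x : 'cV[R]_nx) : 'cV[R]_nz := zstarI x [set: 'I_nc].

Definition Aset (x : 'cV[R]_nx) : {set 'I_nc} :=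
  [set j | (G *m zstar x) j 0 == (S *m x + w) j 0].
Definition Acset (x : 'cV[R]_nx) : {set 'I_nc} :=
  [set j | (G *m zstar x) j 0 < (S *m x + w) j 0].

Definition propb (P : Prop) : bool :=
  if excluded_middle_informative P then true else false.

Definition ball_not_sub (q : 'cV[R]_nz) (r : R) (x : 'cV[R]_nx) (j : 'I_nc) : Prop :=
  ~ (forall z : 'cV[R]_nz, vnorm (z - q) <= r -> inZj x j z).

Definition Tset (kappa : R) (x xh : 'cV[R]_nx) (Iprev : {set 'I_nc}) : {set 'I_nc} :=
  [set j | (j \in Acset xh) && (j \in Iprev) &&
           propb (ball_not_sub (zstar xh) (kappa * vnorm (x - xh)) x j)].

Definition Istep (kappa : R) (x : 'cV[R]_nx) (Iprev : {set 'I_nc}) (xh : 'cV[R]_nx)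
  : {set 'I_nc} :=
  (Aset xh :&: Iprev) :|: Tset kappa x xh Iprev.

Definition Ix (kappa : R) (q : nat) (xhat : 'I_q -> 'cV[R]_nx) (x : 'cV[R]_nx)
  : {set 'I_nc} :=
  foldl (Istep kappa x) [set: 'I_nc] [seq xhat k | k <- enum 'I_q].

Definition sym_pos_def : Prop :=
  H^T = H /\ forall z : 'cV[R]_nz, z != 0 -> 0 < (z^T *m H *m z) 0 0.

Definition feasible_all : Prop :=
  forall x : 'cV[R]_nx, exists z : 'cV[R]_nz, inZI x [set: 'I_nc] z.

Definition LICQ : Prop :=
  forall x : 'cV[R]_nx, forall c : 'I_nc -> R,
    \sum_(j in Aset x) c j *: row j G = 0 -> forall j, j \in Aset x -> c j = 0.

Definition global_lipschitz (kappa : R) : Prop :=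
  forall (x1 x2 : 'cV[R]_nx) (I : {set 'I_nc}),
    vnorm (zstarI x1 I - zstarI x2 I) <= kappa * vnorm (x1 - x2).

End MPQP.

(* Main.v *)
Require Import Defs.
From HB Require Import structures.
From mathcomp Require Import all_boot all_order all_algebra.
From mathcomp Require Import reals ring lra.
From mathcomp Require boolp classical_sets topology normedtype derive.
From Stdlib Require Import ClassicalEpsilon Classical.
Import Order.TTheory GRing.Theory Num.Theory.
Local Open Scope ring_scope.

Module PartA.
Import boolp classical_sets topology normedtype derive.
Import numFieldNormedType.Exports.
Section ExMin.
Local Open Scope classical_set_scope.
Variables (R : realType) (n : nat).

Lemma cont_sum (I : Type) (s : seq I) (f : I -> 'rV[R]_n -> R) :
  (forall i, continuous (f i)) -> continuous (fun v => \sum_(i <- s) f i v).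
Proof.
move=> fc; elim: s => [|i s IH].
  under eq_fun do rewrite big_nil; exact: cst_continuous.
under eq_fun do rewrite big_cons.
by move=> v; apply: continuousD; [exact: fc | exact: IH].
Qed.

Lemma coord_cont (i : 'I_n) : continuous (fun v : 'rV[R]_n => v ord0 i).
Proof. exact: coord_continuous. Qed.

Definition qf (Q : 'M[R]_n) (v : 'rV[R]_n) := (v *m Q *m v^T) ord0 ord0.
Definition lf (a : 'rV[R]_n) (v : 'rV[R]_n) := (a *m v^T) ord0 ord0.

Lemma qfE Q v : qf Q v = \sum_k \sum_i (v ord0 i * Q i k * v ord0 k).
Proof.
rewrite /qf mxE; apply: eq_bigr => k _.
rewrite [(v *m Q) _ _]mxE [v^T _ _]mxE big_distrl /=.
by apply: eq_bigr => i _.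
Qed.

Lemma lfE a v : lf a v = \sum_i a ord0 i * v ord0 i.
Proof. by rewrite /lf mxE; apply: eq_bigr => i _; rewrite mxE. Qed.

Lemma qf_cont Q : continuous (qf Q).
Proof.
have -> : qf Q = (fun v => \sum_k \sum_i (v ord0 i * Q i k * v ord0 k)).
  by apply: funext => v; rewrite qfE.
apply: cont_sum => k; apply: cont_sum => i v.
apply: (@continuousM R 'rV[R]_n (fun v => v ord0 i * Q i k) (fun v => v ord0 k) v); last exact: coord_cont.
apply: (@continuousM R 'rV[R]_n (fun v => v ord0 i) (fun=> Q i k) v); first exact: coord_cont.
exact: cst_continuous.
Qed.

Lemma lf_cont a : continuous (lf a).
Proof.
have -> : lf a = (fun v => \sum_i a ord0 i * v ord0 i).
  by apply: funext => v; rewrite lfE.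
apply: cont_sum => i v; apply: (@continuousM R 'rV[R]_n (fun=> a ord0 i) (fun v => v ord0 i) v); first exact: cst_continuous.
exact: coord_cont.
Qed.

Lemma coord_le_norm (v : 'rV[R]_n) i : `|v ord0 i| <= `|v|.
Proof.
by rewrite [leRHS]/Num.norm /= mx_normrE; apply/bigmax_geP; right => /=; exists (ord0, i).
Qed.

Lemma lf_bound a v : `|lf a v| <= (\sum_i `|a ord0 i|) * `|v|.
Proof.
rewrite lfE big_distrl /=; apply: le_trans (ler_norm_sum _ _ _) _.
apply: ler_sum => i _; rewrite normrM; apply: ler_wpM2l => //.
exact: coord_le_norm.
Qed.


Lemma lin_cont (c : 'I_n -> R) : continuous (fun v : 'rV[R]_n => \sum_i c i * v ord0 i).
Proof.
apply: cont_sum => i v; apply: (@continuousM R 'rV[R]_n (fun=> c i) (fun v => v ord0 i) v).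
  exact: cst_continuous.
exact: coord_cont.
Qed.

Lemma closed_half (c : 'I_n -> R) (b : R) :
  closed [set v : 'rV[R]_n | \sum_i c i * v ord0 i <= b].
Proof.
have -> : [set v : 'rV[R]_n | \sum_i c i * v ord0 i <= b] =
   (fun v : 'rV[R]_n => \sum_i c i * v ord0 i) @^-1` [set x | x <= b] by [].
apply: preimage_closed; last exact: closed_le.
by move=> v _; apply: lin_cont.
Qed.

Lemma closed_normle (r : R) : closed [set v : 'rV[R]_n | `|v| <= r].
Proof.
have -> : [set v : 'rV[R]_n | `|v| <= r] = (Num.norm : 'rV[R]_n -> R) @^-1` [set x | x <= r] by [].
apply: preimage_closed; last exact: closed_le.
by move=> v _; apply: norm_continuous.
Qed.

Lemma closed_normge (r : R) : closed [set v : 'rV[R]_n | r <= `|v|].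
Proof.
have -> : [set v : 'rV[R]_n | r <= `|v|] = (Num.norm : 'rV[R]_n -> R) @^-1` [set x | r <= x] by [].
apply: preimage_closed; last exact: closed_ge.
by move=> v _; apply: norm_continuous.
Qed.

Lemma bounded_normle (A : set 'rV[R]_n) (r : R) :
  (forall v, A v -> `|v| <= r) -> bounded_set A.
Proof.
move=> Ar; exists r; split; first by rewrite num_real.
by move=> M rM v Av; apply: le_trans (Ar v Av) (ltW rM).
Qed.

Lemma qfZ Q k v : qf Q (k *: v) = k ^+ 2 * qf Q v.
Proof.
rewrite /qf linearZ /= -!scalemxAl -scalemxAr. rewrite mxE. rewrite mxE. by rewrite mulrA -expr2.
Qed.

Lemma qf0 Q : qf Q 0 = 0.
Proof. by rewrite /qf mul0mx mul0mx mxE. Qed.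

Lemma qf_coercive {Q} : (forall v, v != 0 -> 0 < qf Q v) ->
  exists2 m, 0 < m & forall v, m * `|v| ^+ 2 <= qf Q v.
Proof.
move=> Qpos.
case: (pselect (exists v0 : 'rV[R]_n, v0 != 0)) => [[v0 v0nz]|no]; last first.
  exists 1 => // v; have -> : v = 0 by apply/eqP/negPn/negP => h; apply: no; exists v.
  by rewrite normr0 expr0n /= mulr0 qf0.
pose Sph := [set v : 'rV[R]_n | `|v| <= 1] `&` [set v : 'rV[R]_n | 1 <= `|v|].
have n0 : `|v0| != 0 by rewrite normr_eq0.
have Sne : Sph !=set0.
  exists (`|v0|^-1 *: v0); rewrite /Sph /= normrZ normfV normr_id mulVf //.
have Scp : compact Sph.
  apply: bounded_closed_compact.
    by apply: (@bounded_normle _ 1) => v [].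
  by apply: closedI; [apply: closed_normle | apply: closed_normge].
have [c cS cmin] := EVT_min_rV Sne Scp (continuous_subspaceT (qf_cont Q)).
have cS' : `|c| = 1 by move: cS; rewrite inE => -[h1 h2]; apply/le_anti; rewrite h1 h2.
have cnz : c != 0 by rewrite -normr_eq0 cS' oner_eq0.
exists (qf Q c); first exact: Qpos.
move=> v; have [->|vnz] := eqVneq v 0; first by rewrite normr0 expr0n /= mulr0 qf0.
have nv : `|v| != 0 by rewrite normr_eq0.
have uS : (`|v|^-1 *: v) \in Sph.
  rewrite inE /Sph /= normrZ normfV normr_id mulVf //.
have := cmin _ uS; rewrite qfZ exprVn.
rewrite ler_pdivlMl ?exprn_gt0 ?normr_gt0 //.
by rewrite mulrC.
Qed.


Lemma exists_min_poly (Q : 'M[R]_n) (a : 'rV[R]_n) (k : nat) (M : 'M[R]_(n, k))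
    (b : 'I_k -> R) (I : pred 'I_k) :
  (forall v, v != 0 -> 0 < qf Q v) ->
  (exists p : 'rV[R]_n, forall j, I j -> (p *m M) ord0 j <= b j) ->
  exists c : 'rV[R]_n, (forall j, I j -> (c *m M) ord0 j <= b j) /\
     forall v : 'rV[R]_n, (forall j, I j -> (v *m M) ord0 j <= b j) ->
       qf Q c / 2 + lf a c <= qf Q v / 2 + lf a v.
Proof.
move=> Qpos [p pP].
have [m m0 mQ] := qf_coercive Qpos.
pose C := \sum_i `|a ord0 i|.
have C0 : 0 <= C by apply: sumr_ge0 => i _.
pose f v := qf Q v / 2 + lf a v.
pose rho := Num.max 1 ((2 * C + 2 * `|f p| + 2) / m).
have far : forall v, rho < `|v| -> f p < f v.
  move=> v; rewrite /rho gt_max => /andP [h1 h2].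
  have h3 : 2 * C + 2 * `|f p| + 2 <= m * `|v|.
    by rewrite [m * _]mulrC -ler_pdivrMr //; apply: ltW.
  have h4 := mQ v.
  have h5 : - (C * `|v|) <= lf a v.
    by have := lf_bound a v; rewrite ler_norml => /andP [].
  have h6 := ler_norm (f p).
  have h7 : 0 <= `|f p| by [].
  rewrite /f; move: h1 h3 h4 h5 h6 h7; rewrite -/C /f.
  move: (qf Q v) (lf a v) (`|v|) (`|_ + _|) => q l r fa.
  move=> *; nra.
pose P := \bigcap_(j in [set j | I j]) [set v : 'rV[R]_n | \sum_i M i j * v ord0 i <= b j].
have PE : forall v, P v <-> (forall j, I j -> (v *m M) ord0 j <= b j).
  move=> v; have E : forall j, (v *m M) ord0 j = \sum_i M i j * v ord0 i.
    by move=> j; rewrite mxE; apply: eq_bigr => i _; rewrite mulrC.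
  split => h j Ij; first by have := h j Ij; rewrite /= -E.
  by rewrite /= -E; apply: h.
pose A := P `&` [set v | `|v| <= rho].
have pA : A p.
  split; first by apply/PE.
  by rewrite /=; rewrite leNgt; apply/negP => /far; rewrite ltxx.
have Ane : A !=set0 by exists p.
have Acp : compact A.
  apply: bounded_closed_compact.
    by apply: (@bounded_normle _ rho) => v [].
  apply: closedI; last exact: closed_normle.
  by apply: closed_bigI => j _; apply: closed_half.
have fc : continuous f.
  move=> v; apply: (@continuousD R R 'rV[R]_n (fun v => qf Q v / 2) (lf a) v); last exact: lf_cont.
  apply: (@continuousM R 'rV[R]_n (qf Q) (fun=> 2^-1) v); first exact: qf_cont.
  exact: cst_continuous.
have [c cA cmin] := EVT_min_rV Ane Acp (continuous_subspaceT fc).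
move: cA; rewrite inE => -[cP cr].
exists c; split; first by apply/PE.
move=> v /PE vP; rewrite -/(f c) -/(f v).
have [vr|vr] := leP `|v| rho.
  by apply: cmin; rewrite inE.
apply: le_trans (ltW (far _ vr)).
by apply: cmin; rewrite inE.
Qed.

End ExMin.
End PartA.

Set Implicit Arguments. Unset Strict Implicit.

Section Main.
Variables (R : realType) (nz nx nc : nat).
Variables (H : 'M[R]_nz) (F : 'M[R]_(nx, nz)) (G : 'M[R]_(nc, nz))
          (S : 'M[R]_(nc, nx)) (w : 'cV[R]_nc).
Hypothesis Hspd : sym_pos_def H.

Definition qd (d : 'cV[R]_nz) := (d^T *m H *m d) 0 0.
Definition gd (x : 'cV[R]_nx) (z d : 'cV[R]_nz) := ((z^T *m H + x^T *m F) *m d) 0 0.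

Lemma qd_ge0 d : 0 <= qd d.
Proof.
have [->|dnz] := eqVneq d 0; first by rewrite /qd mulmx0 mxE.
by apply: ltW; case: Hspd => _ /(_ d dnz).
Qed.

Lemma qd_eq0 d : qd d <= 0 -> d = 0.
Proof.
move=> h; apply/eqP/negPn/negP => dnz.
by case: Hspd => _ /(_ d dnz) => h2; move: (lt_le_trans h2 h); rewrite ltxx.
Qed.

Lemma symH (z d : 'cV[R]_nz) : (d^T *m H *m z) 0 0 = (z^T *m H *m d) 0 0.
Proof.
have -> : (d^T *m H *m z) 0 0 = ((d^T *m H *m z)^T) 0 0 by rewrite [in RHS]mxE.
case: Hspd => Hs _.
by rewrite !trmx_mul trmxK Hs mulmxA.
Qed.

Lemma e00D (A B : 'M[R]_1) : (A + B) 0 0 = A 0 0 + B 0 0.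
Proof. by rewrite mxE. Qed.

Lemma Vexp x z d : Vobj H F x (z + d) = Vobj H F x z + gd x z d + qd d / 2.
Proof.
rewrite /Vobj /gd /qd !linearD /= ?mulmxDl ?mulmxDr ?mulmxDl ?mulmxDr !e00D (symH z d).
lra.
Qed.


Lemma eD m (A B : 'cV[R]_m) j : (A + B) j 0 = A j 0 + B j 0.
Proof. by rewrite mxE. Qed.
Lemma eZ m (A : 'cV[R]_m) t j : (t *: A) j 0 = t * A j 0.
Proof. by rewrite mxE. Qed.
Lemma eN m (A : 'cV[R]_m) j : (- A) j 0 = - A j 0.
Proof. by rewrite mxE. Qed.
Lemma eB m (A B : 'cV[R]_m) j : (A - B) j 0 = A j 0 - B j 0.
Proof. by rewrite eD eN. Qed.
Lemma GD (z d : 'cV[R]_nz) j : (G *m (z + d)) j 0 = (G *m z) j 0 + (G *m d) j 0.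
Proof. by rewrite mulmxDr eD. Qed.
Lemma GZ (d : 'cV[R]_nz) t j : (G *m (t *: d)) j 0 = t * (G *m d) j 0.
Proof. by rewrite -scalemxAr eZ. Qed.
Lemma GN (d : 'cV[R]_nz) j : (G *m (- d)) j 0 = - (G *m d) j 0.
Proof. by rewrite mulmxN eN. Qed.
Lemma GB (z d : 'cV[R]_nz) j : (G *m (z - d)) j 0 = (G *m z) j 0 - (G *m d) j 0.
Proof. by rewrite GD GN. Qed.

Lemma gdD x z d1 d2 : gd x z (d1 + d2) = gd x z d1 + gd x z d2.
Proof. by rewrite /gd mulmxDr e00D. Qed.
Lemma gdZ x z t d : gd x z (t *: d) = t * gd x z d.
Proof. by rewrite /gd -scalemxAr mxE. Qed.
Lemma gdN x z d : gd x z (- d) = - gd x z d.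
Proof. by rewrite /gd mulmxN mxE. Qed.
Lemma gd_sum x z (I : finType) (P : pred I) (f : I -> 'cV[R]_nz) :
  gd x z (\sum_(i | P i) f i) = \sum_(i | P i) gd x z (f i).
Proof.
elim/big_rec2: _ => [|i y1 y2 _ <-]; first by rewrite /gd mulmx0 mxE.
by rewrite gdD.
Qed.
Lemma qdZ t d : qd (t *: d) = t ^+ 2 * qd d.
Proof.
rewrite /qd [(t *: d)^T]linearZ /= -!scalemxAl -scalemxAr mxE mxE.
by rewrite mulrA -expr2.
Qed.

Lemma VexpZ x z d t :
  Vobj H F x (z + t *: d) = Vobj H F x z + t * gd x z d + t ^+ 2 * qd d / 2.
Proof. by rewrite Vexp gdZ qdZ. Qed.

Lemma inZI_conv x I z1 z2 t : 0 <= t -> t <= 1 ->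
  inZI G S w x I z1 -> inZI G S w x I z2 -> inZI G S w x I (z1 + t *: (z2 - z1)).
Proof.
move=> t0 t1 h1 h2 j jI; have := h1 j jI; have := h2 j jI.
rewrite /inZj GD GZ GB.
move: ((G *m z1) j 0) ((G *m z2) j 0) ((S *m x + w) j 0) => a1 a2 bb.
move=> *; nra.
Qed.

Lemma min_uniq x I z1 z2 :
  is_minimizer H F G S w x I z1 -> is_minimizer H F G S w x I z2 -> z1 = z2.
Proof.
move=> [f1 m1] [f2 m2].
pose d := z2 - z1.
have z2E : z2 = z1 + 1 *: d by rewrite /d scale1r addrCA subrr addr0.
have fm : inZI G S w x I (z1 + 2^-1 *: d).
  by apply: inZI_conv => //; lra.
have h1 := m1 _ fm; have h2 := m1 _ f2; have h3 := m2 _ f1.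
rewrite VexpZ in h1; rewrite z2E VexpZ in h2 h3.
have q0 := qd_ge0 d.
have : qd d <= 0.
  by move: h1 h2 h3 q0; move: (gd x z1 d) (qd d) (Vobj H F x z1) => g q v0 h1 h2 h3 q0; nra.
by move=> /qd_eq0 d0; rewrite z2E d0 scaler0 addr0.
Qed.

Lemma zstarI_spec x I : (exists z, is_minimizer H F G S w x I z) ->
  is_minimizer H F G S w x I (zstarI H F G S w x I).
Proof. by move=> h; rewrite /zstarI; apply: epsilon_spec. Qed.

Lemma zstarI_eq x I z : is_minimizer H F G S w x I z -> zstarI H F G S w x I = z.
Proof.
move=> h; exact: (min_uniq (zstarI_spec (ex_intro _ z h)) h).
Qed.



Notation bb x := (S *m x + w).

Lemma seg_test x z d t : 0 < t -> t <= 1 ->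
  Vobj H F x z <= Vobj H F x (z + t *: d) -> Vobj H F x z <= Vobj H F x (z + d).
Proof.
move=> t0 t1; rewrite VexpZ.
have -> : z + d = z + 1 *: d by rewrite scale1r.
rewrite VexpZ; have q0 := qd_ge0 d.
move: q0; move: (gd x z d) (qd d) (Vobj H F x z) => g q v q0 h.
have : 0 <= t * (g + t * q / 2) by nra.
rewrite pmulr_rge0 // => h2; nra.
Qed.

Lemma addsub (z z' : 'cV[R]_nz) : z + (z' - z) = z'.
Proof. by rewrite addrCA subrr addr0. Qed.

Lemma drop_inactive x I z j : is_minimizer H F G S w x I z ->
  (G *m z) j 0 < (bb x) j 0 -> is_minimizer H F G S w x (I :\ j) z.
Proof.
move=> [fz mz] hj; split.
  by move=> l; rewrite in_setD1 => /andP [_ lI]; apply: fz.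
move=> z' fz'.
pose d := z' - z; pose sl := (bb x) j 0 - (G *m z) j 0; pose a := `|(G *m d) j 0|.
have sl0 : 0 < sl by rewrite subr_gt0.
have a0 : 0 <= a by rewrite /a normr_ge0.
have as0 : 0 < a + sl by lra.
pose t := sl / (a + sl).
have asl : a + sl != 0 by rewrite gt_eqF.
have ht : t * (a + sl) = sl by rewrite /t mulfVK.
have t0 : 0 < t by rewrite /t divr_gt0.
have t1 : t <= 1 by rewrite /t ler_pdivrMr // mul1r; lra.
rewrite -(addsub z z'); apply: (@seg_test _ _ _ t) => //.
apply: mz => l lI.
have fzD : inZI G S w x (I :\ j) z by move=> k; rewrite in_setD1 => /andP [_ kI]; apply: fz.
have [->|lj] := eqVneq l j.
  rewrite /inZj GD GZ -/d.
  have := ler_norm ((G *m d) j 0); rewrite -/a => ha.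
  have : (G *m z) j 0 + sl = (bb x) j 0 by rewrite /sl addrCA subrr addr0.
  move=> hb; nra.
have := inZI_conv (ltW t0) t1 fzD fz'; rewrite -/d => h.
by apply: h; rewrite in_setD1 lj.
Qed.

Lemma small_t (g q t0 : R) : 0 < t0 -> 0 <= q ->
  (forall t, 0 < t -> t <= t0 -> 0 <= g + t * q) -> 0 <= g.
Proof.
move=> t00 q0 h; rewrite leNgt; apply/negP => g0.
pose t := Num.min t0 (- g / (q + 1)).
have q1 : 0 < q + 1 by lra.
have tp : 0 < t by rewrite lt_min t00 divr_gt0 // oppr_gt0.
have tt0 : t <= t0 by rewrite ge_min lexx.
have tg : t <= - g / (q + 1) by rewrite ge_min lexx orbT.
have tg' : t * (q + 1) <= - g by rewrite -ler_pdivlMr.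
have := h t tp tt0; nra.
Qed.


Lemma FD x J z0 d : is_minimizer H F G S w x J z0 ->
  (forall l, l \in J -> (G *m z0) l 0 < (bb x) l 0 \/ (G *m d) l 0 <= 0) ->
  0 <= gd x z0 d.
Proof.
move=> [fz mz] hJ.
pose s l := (bb x) l 0 - (G *m z0) l 0.
pose f l := if (l \in J) && (0 < s l) then `|(G *m d) l 0| / s l else 0.
have f0 : forall l, 0 <= f l.
  move=> l; rewrite /f; case: ifP => // /andP [_ sl].
  by rewrite divr_ge0 // ltW.
pose T := 1 + \sum_l f l.
have sum0 : 0 <= \sum_l f l by apply: sumr_ge0 => l _.
have T1 : 1 <= T by rewrite /T lerDl.
have T0 : 0 < T by lra.
have fT : forall l, f l <= T.
  move=> l; rewrite /T (bigD1 l) //=.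
  have : 0 <= \sum_(i | i != l) f i by apply: sumr_ge0.
  lra.
apply: (@small_t _ (qd d / 2) (T^-1)); first by rewrite invr_gt0.
  by apply: divr_ge0 => //; apply: qd_ge0.
move=> t tp tT.
have tT' : t * T <= 1 by rewrite -ler_pdivlMr // mul1r.
have feas : inZI G S w x J (z0 + t *: d).
  move=> l lJ; rewrite /inZj GD GZ.
  have fzl := fz l lJ; rewrite /inZj in fzl.
  case: (hJ l lJ) => [hs|hd]; last by nra.
  have sl : 0 < s l by rewrite subr_gt0.
  have fl : f l = `|(G *m d) l 0| / s l by rewrite /f lJ sl.
  have flT := fT l; rewrite fl in flT.
  have e : `|(G *m d) l 0| = `|(G *m d) l 0| / s l * s l by rewrite mulfVK // gt_eqF.
  have hn := ler_norm ((G *m d) l 0).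
  have sE : (G *m z0) l 0 + s l = (bb x) l 0 by rewrite /s addrCA subrr addr0.
  have fu : 0 <= `|(G *m d) l 0| / s l by rewrite -fl.
  move: flT e hn sE fu; move: (`|(G *m d) l 0| / s l) => u flT e hn sE fu.
  have h1 : t * (G *m d) l 0 <= t * (u * s l) by rewrite -e; nra.
  have h2 : t * u <= 1 by nra.
  have h3 : t * (u * s l) <= s l by rewrite mulrA; apply: ler_piMl => //; apply: ltW.
  lra.
have := mz _ feas; rewrite VexpZ => h.
have : 0 <= t * (gd x z0 d + t * (qd d / 2)) by nra.
by rewrite pmulr_rge0.
Qed.


Hypothesis Hex : forall x I, (exists z, inZI G S w x I z) ->
  exists z, is_minimizer H F G S w x I z.
Hypothesis Hfeas : feasible_all G S w.

Lemma zstarI_min x I : is_minimizer H F G S w x I (zstarI H F G S w x I).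
Proof.
apply: zstarI_spec; apply: Hex.
have [z hz] := Hfeas x; exists z => j _; apply: hz; exact: in_setT.
Qed.

Lemma zstar_min x : is_minimizer H F G S w x [set: 'I_nc] (zstar H F G S w x).
Proof. exact: zstarI_min. Qed.

Lemma propbP (P : Prop) : propb P = true <-> P.
Proof. by rewrite /propb; case: excluded_middle_informative. Qed.

Lemma drop_one kappa x xh (Iprev : {set 'I_nc}) j : global_lipschitz H F G S w kappa ->
  j \in Iprev -> j \notin Istep H F G S w kappa x Iprev xh ->
  is_minimizer H F G S w x ([set: 'I_nc] :\ j) (zstar H F G S w x).
Proof.
move=> Lip jI; rewrite /Istep in_setU in_setI negb_or jI andbT => /andP [nA nT].
have [fck mck] := zstar_min xh.
have jlt : (G *m zstar H F G S w xh) j 0 < (bb xh) j 0.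
  rewrite lt_neqAle; move: nA; rewrite /Aset inE => -> /=.
  exact: (fck j (in_setT j)).
have jAc : j \in Acset H F G S w xh by rewrite inE.
move: nT; rewrite /Tset inE jAc jI /= => nT.
have hball : forall z, vnorm (z - zstar H F G S w xh) <= kappa * vnorm (x - xh) ->
    inZj G S w x j z.
  move=> z hz; apply: NNPP => hn; move/negP: nT; apply; apply/propbP.
  by move=> hall; apply: hn; apply: hall.
have e1 : zstarI H F G S w xh ([set: 'I_nc] :\ j) = zstar H F G S w xh.
  by apply: zstarI_eq; apply: drop_inactive => //; apply: zstar_min.
have [fz' mz'] := zstarI_min x ([set: 'I_nc] :\ j).
set z' := zstarI H F G S w x ([set: 'I_nc] :\ j) in fz' mz'.
have hj : inZj G S w x j z'.
  apply: hball; rewrite -e1; exact: Lip.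
have fz'T : inZI G S w x [set: 'I_nc] z'.
  move=> l _; have [->//|lj] := eqVneq l j.
  by apply: fz'; rewrite in_setD1 lj in_setT.
have [f0 m0] := zstar_min x.
split.
  by move=> l _; apply: f0; exact: in_setT.
move=> z hz; apply: le_trans (m0 _ fz'T) (mz' _ hz).
Qed.

Lemma fold_drop kappa x (s : seq 'cV[R]_nx) (I0 : {set 'I_nc}) j :
  j \in I0 -> j \notin foldl (Istep H F G S w kappa x) I0 s ->
  exists (xh : 'cV[R]_nx) (Iprev : {set 'I_nc}), j \in Iprev /\ j \notin Istep H F G S w kappa x Iprev xh.
Proof.
elim: s I0 => [|xh s IH] I0 /=; first by move=> ->.
move=> jI0 jn.
case: (boolP (j \in Istep H F G S w kappa x I0 xh)) => h.
  exact: IH h jn.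
by exists xh, I0.
Qed.


Lemma dual_basis x : LICQ H F G S w -> exists u : 'I_nc -> 'cV[R]_nz,
  forall i l, i \in Aset H F G S w x -> l \in Aset H F G S w x ->
    (G *m u i) l 0 = (l == i)%:R.
Proof.
move=> Hlicq; set A := Aset H F G S w x.
case: (set_0Vmem A) => [A0|[i0 i0A]].
  by exists (fun=> 0) => i l; rewrite A0 inE.
pose GA : 'M[R]_(#|A|, nz) := \matrix_(r, c) G (enum_val r) c.
have rowGA : forall r, row r GA = row (enum_val r) G.
  by move=> r; apply/rowP => c; rewrite !mxE.
have rf : row_free GA.
  apply/inj_row_free => v vG.
  pose c j := v 0 (enum_rank_in i0A j).
  have hs : \sum_(j in A) c j *: row j G = 0.
    rewrite big_enum_val /=; rewrite -[RHS]vG mulmx_sum_row.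
    apply: eq_bigr => r _; by rewrite /c enum_valK_in rowGA.
  have h := Hlicq x c hs.
  apply/rowP => r; rewrite [RHS]mxE.
  have := h (enum_val r) (enum_valP r); by rewrite /c enum_valK_in.
have [B hB] := row_freeP rf.
exists (fun i => col (enum_rank_in i0A i) B) => i l iA lA.
have e : (G *m col (enum_rank_in i0A i) B) l 0 =
    (GA *m B) (enum_rank_in i0A l) (enum_rank_in i0A i).
  rewrite !mxE; apply: eq_bigr => c _; by rewrite !mxE enum_rankK_in.
rewrite e hB mxE; congr ((nat_of_bool _)%:R).
by apply/idP/idP => /eqP h; apply/eqP; [exact: (enum_rank_in_inj lA iA h) | rewrite h].
Qed.


Lemma Gsum (I : finType) (P : pred I) (c : I -> R) (u : I -> 'cV[R]_nz) l :
  (G *m (\sum_(i | P i) c i *: u i)) l 0 = \sum_(i | P i) c i * (G *m u i) l 0.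
Proof.
rewrite mulmx_sumr summxE; apply: eq_bigr => i _; by rewrite GZ.
Qed.

Lemma slack_or x l : l \notin Aset H F G S w x ->
  (G *m zstar H F G S w x) l 0 < (bb x) l 0.
Proof.
have [f0 _] := zstar_min x.
by rewrite /Aset inE => nA; rewrite lt_neqAle nA; apply: f0; exact: in_setT.
Qed.

Lemma main_min kappa q (xhat : 'I_q -> 'cV[R]_nx) x :
  LICQ H F G S w -> global_lipschitz H F G S w kappa ->
  is_minimizer H F G S w x (Ix H F G S w kappa xhat x) (zstar H F G S w x).
Proof.
move=> Hlicq Lip.
set I := Ix H F G S w kappa xhat x.
set z0 := zstar H F G S w x.
have [f0 m0] := zstar_min x.
have hdrop : forall j, j \notin I -> is_minimizer H F G S w x ([set: 'I_nc] :\ j) z0.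
  move=> j jn.
  have [xh [Ip [jIp jn']]] := fold_drop (in_setT j) jn.
  exact: drop_one Lip jIp jn'.
have [u hu] := dual_basis x Hlicq.
set A := Aset H F G S w x.
split; first by move=> l _; apply: f0; exact: in_setT.
move=> z1 hz1.
pose d := z1 - z0.
pose D := [set i | (i \in A) && (i \notin I)].
pose dd := \sum_(i in D) ((G *m d) i 0) *: u i.
pose d' := d - dd.
have Gdd : forall l, l \in A -> (G *m dd) l 0 = if l \in D then (G *m d) l 0 else 0.
  move=> l lA; rewrite /dd Gsum.
  case: ifP => lD.
    rewrite (bigD1 l) //= big1 ?addr0.
      by rewrite hu // ?eqxx ?mulr1 //; move: lD; rewrite inE => /andP [].
    move=> i /andP [iD il]; rewrite hu //; last by move: iD; rewrite inE => /andP [].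
    by rewrite eq_sym (negbTE il) mulr0.
  apply: big1 => i iD; rewrite hu //; last by move: iD; rewrite inE => /andP [].
  have -> : (l == i) = false by apply/negP => /eqP e; move: lD; rewrite e iD.
  by rewrite mulr0.
have gd' : 0 <= gd x z0 d'.
  apply: (FD (zstar_min x)) => l _.
  case: (boolP (l \in A)) => lA; last by left; apply: slack_or.
  right; rewrite /d' GB Gdd //.
  case: ifP => lD; first by rewrite subrr.
  rewrite subr0 /d GB.
  have lI : l \in I by move: lD; rewrite inE lA /= => /negbFE.
  have := hz1 l lI; rewrite /inZj.
  have : (G *m z0) l 0 = (bb x) l 0 by move: lA; rewrite /A /Aset inE => /eqP.
  move=> ->; lra.
have gdu : forall i, i \in D -> gd x z0 (u i) = 0.
  move=> i; rewrite inE => /andP [iA iI].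
  apply/le_anti/andP; split.
    have : 0 <= gd x z0 (- u i).
      apply: (FD (zstar_min x)) => l _.
      case: (boolP (l \in A)) => lA; last by left; apply: slack_or.
      right; rewrite GN hu //; rewrite oppr_le0; by case: (l == i).
    by rewrite gdN oppr_ge0.
  apply: (FD (hdrop i iI)) => l; rewrite in_setD1 => /andP [li _].
  case: (boolP (l \in A)) => lA; last by left; apply: slack_or.
  by right; rewrite hu // (negbTE li).
have gdd : gd x z0 d = gd x z0 d'.
  have -> : d = d' + dd by rewrite /d' subrK.
  rewrite gdD /dd gd_sum big1 ?addr0.
    by [].
  by move=> i iD; rewrite gdZ gdu // mulr0.
rewrite -(addsub z0 z1) -/d Vexp gdd.
have := qd_ge0 d; lra.
Qed.

End Main.

Lemma Hex_proof (R : realType) (nz nx nc : nat) (H : 'M[R]_nz) (F : 'M[R]_(nx, nz))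
  (G : 'M[R]_(nc, nz)) (S : 'M[R]_(nc, nx)) (w : 'cV[R]_nc) :
  sym_pos_def H -> forall x I, (exists z, inZI G S w x I z) ->
  exists z, is_minimizer H F G S w x I z.
Proof.
move=> [_ Hpos] x I [z0 hz0].
have GE : forall (z : 'cV[R]_nz) j, (z^T *m G^T) 0 j = (G *m z) j 0.
  by move=> z j; rewrite -trmx_mul mxE.
have VE : forall (z : 'cV[R]_nz), Vobj H F x z = @PartA.qf R nz H z^T / 2 + @PartA.lf R nz (x^T *m F) z^T.
  move=> z; rewrite /Vobj /PartA.qf /PartA.lf trmxK.
  by rewrite [2^-1 * _]mulrC.
have Qp : forall v : 'rV[R]_nz, v != 0 -> 0 < PartA.qf R nz H v.
  move=> v vnz; rewrite /PartA.qf.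
  have := Hpos v^T; rewrite trmxK; apply.
  by apply: contra vnz => /eqP h; apply/eqP; rewrite -(trmxK v) h linear0.
have pf : exists p : 'rV[R]_nz, forall j, j \in I -> (p *m G^T) ord0 j <= (S *m x + w) j 0.
  by exists z0^T => j jI; rewrite GE; apply: hz0.
have [c [cP cmin]] := @PartA.exists_min_poly R nz H (x^T *m F) nc G^T (fun j => (S *m x + w) j 0)
  (fun j => j \in I) Qp pf.
exists c^T; split.
  move=> j jI; have := cP j jI; have := GE c^T j; rewrite trmxK => ->; by [].
move=> z hz; rewrite !VE trmxK; apply: cmin => j jI; rewrite GE; exact: hz.
Qed.

Theorem theorem2 (R : realType) (nz nx nc : nat)
  (H : 'M[R]_nz) (F : 'M[R]_(nx, nz)) (G : 'M[R]_(nc, nz))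
  (S : 'M[R]_(nc, nx)) (w : 'cV[R]_nc) (kappa : R)
  (q : nat) (xhat : 'I_q -> 'cV[R]_nx) (x : 'cV[R]_nx) :
  sym_pos_def H ->
  feasible_all G S w ->
  LICQ H F G S w ->
  global_lipschitz H F G S w kappa ->
  zstarI H F G S w x (Ix H F G S w kappa xhat x) = zstar H F G S w x.
Proof.
move=> Hspd Hfeas Hlicq Lip.
apply: zstarI_eq => //.
apply: main_min => //.
exact: Hex_proof.
Qed.
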